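(* Let $T_{ab}$ be a rank-2 tensor. (a) The following are equivalent: $T_{ac}T_b{}^c=0$; $T_a{}^b$ is a singular null-cone preserving map; $T_{ab}=s_ak_b$ for some covector $s$ and null covector $k$. (b) The following are equivalent: $T_{ac}T_b{}^c=0$ and $T_{ca}T^c{}_b=0$; $T_a{}^b$ is a singular null-cone bi-preserving map; $T_{ab}=n_ak_b$ for null covectors $n,k$ (or $T=0$). In case (b), $T_{ab}\in\mathcal{DP}\cup-\mathcal{DP}$.
   Context: Lorentzian metric $g_{ab}$ of signature $(+,-,\dots,-)$, dimension $N\ge3$, with a time orientation; null: $v\neq0$, $v_av^a=0$. $T_a{}^b$ is null-cone preserving if $k^aT_a{}^b$ is null or zero for all null $k$; bi-preserving if moreover $T_a{}^bk_b$ is null or zero for all null $k$; singular if $\det(T_a{}^b)=0$. $\mathcal{DP}$: rank-2 tensors with $T_{ab}u^av^b\ge0$ for all causal (nonzero, $v\cdot v\ge0$) future-pointing $u,v$; $-\mathcal{DP}$ its negatives. *)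

(* Defs.v *)
From HB Require Import structures.
From mathcomp Require Import all_boot all_order all_algebra.
From mathcomp Require Import reals.
Set Implicit Arguments. Unset Strict Implicit. Unset Printing Implicit Defensive.
Import Order.TTheory GRing.Theory Num.Theory.
Local Open Scope ring_scope.

Section Lorentz.
Variables (R : realType) (N : nat).

(* Vectors (upper index) and covectors (lower index) are both represented
   as row vectors 'rV_N of components; rank-2 tensors T_{ab} as 'M_N with
   T a b = T_{ab}. *)

Definition bil (A : 'M[R]_N) (u v : 'rV[R]_N) : R := (u *m A *m v^T) ord0 ord0.

Definition eta : 'M[R]_N :=
  diag_mx (\row_(i < N) (if nat_of_ord i == 0%N then 1 else -1)).

(* g_{ab} is a Lorentzian metric of signature (+,-,...,-):
   symmetric and congruent to eta (Sylvester). *)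
Definition lorentzian (g : 'M[R]_N) : Prop :=
  g^T = g /\ exists P : 'M[R]_N, P \in unitmx /\ g = P^T *m eta *m P.

Definition ginv (g : 'M[R]_N) : 'M[R]_N := invmx g.

Definition timelike (g : 'M[R]_N) (v : 'rV[R]_N) : Prop := 0 < bil g v v.

Definition null_vec (g : 'M[R]_N) (v : 'rV[R]_N) : Prop :=
  v != 0 /\ bil g v v = 0.

Definition null_cov (g : 'M[R]_N) (k : 'rV[R]_N) : Prop :=
  k != 0 /\ bil (ginv g) k k = 0.

(* time orientation given by a timelike vector tau; a causal vector v
   (v <> 0, g(v,v) >= 0) is future-pointing iff g(tau, v) > 0 *)
Definition future_causal (g : 'M[R]_N) (tau v : 'rV[R]_N) : Prop :=
  v != 0 /\ 0 <= bil g v v /\ 0 < bil g tau v.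

(* mixed tensor T_a^b = T_{ac} g^{cb} *)
Definition mixed (g T : 'M[R]_N) : 'M[R]_N := T *m ginv g.

Definition null_cone_preserving (g T : 'M[R]_N) : Prop :=
  forall k, null_vec g k ->
    bil g (k *m mixed g T) (k *m mixed g T) = 0.

Definition null_cone_bi_preserving (g T : 'M[R]_N) : Prop :=
  null_cone_preserving g T /\
  forall k, null_cov g k ->
    bil (ginv g) (mixed g T *m k^T)^T (mixed g T *m k^T)^T = 0.

Definition singular (g T : 'M[R]_N) : Prop := \det (mixed g T) = 0.

Definition outer (s k : 'rV[R]_N) : 'M[R]_N := s^T *m k.

(* T_{ac} T_b^c = T_{ac} g^{cd} T_{bd} *)
Definition TTt (g T : 'M[R]_N) : 'M[R]_N := T *m ginv g *m T^T.
(* T_{ca} T^c_b = g^{cd} T_{da} T_{cb} *)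
Definition TtT (g T : 'M[R]_N) : 'M[R]_N := T^T *m ginv g *m T.

Definition DP (g : 'M[R]_N) (tau : 'rV[R]_N) (T : 'M[R]_N) : Prop :=
  forall u v, future_causal g tau u -> future_causal g tau v ->
    0 <= bil T u v.

End Lorentz.

(* Main.v *)
Require Import Defs.
From HB Require Import structures.
From mathcomp Require Import all_boot all_order all_algebra.
From mathcomp Require Import reals.
From mathcomp Require Import ring lra.
Set Implicit Arguments. Unset Strict Implicit. Unset Printing Implicit Defensive.
Import Order.TTheory GRing.Theory Num.Theory.
Local Open Scope ring_scope.

Lemma sum2_split (R : realType) n (F1 F2 F3 : 'I_n -> 'I_n -> R) :
  \sum_i \sum_j (F1 i j + (F2 i j - 2 * F3 i j)) =
  \sum_i \sum_j F1 i j + (\sum_i \sum_j F2 i j - 2 * \sum_i \sum_j F3 i j).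
Proof.
rewrite mulr_sumr -sumrB -big_split; apply: eq_bigr => i _.
by rewrite mulr_sumr -sumrB -big_split.
Qed.

Lemma CS (R : realType) n (f g : 'I_n -> R) :
  (\sum_i f i * g i) ^+ 2 <= (\sum_i f i * f i) * (\sum_i g i * g i).
Proof.
set A := \sum_i f i * f i; set B := \sum_i g i * g i; set C := \sum_i f i * g i.
have H1 : \sum_i \sum_j (f i * f i) * (g j * g j) = A * B by rewrite big_distrlr.
have H2 : \sum_i \sum_j (g i * g i) * (f j * f j) = A * B by rewrite mulrC big_distrlr.
have H3 : \sum_i \sum_j (f i * g i) * (f j * g j) = C ^+ 2 by rewrite expr2 big_distrlr.
have H : \sum_i \sum_j (f i * g j - f j * g i) ^+ 2 = 2 * (A * B - C ^+ 2).
  have E : forall i j, (f i * g j - f j * g i) ^+ 2 =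
     (f i * f i) * (g j * g j) + ((g i * g i) * (f j * f j) - 2 * ((f i * g i) * (f j * g j))).
    by move=> i j; ring.
  under eq_bigr => i _ do under eq_bigr => j _ do rewrite E.
  rewrite sum2_split H1 H2 H3; ring.
have : 0 <= \sum_i \sum_j (f i * g j - f j * g i) ^+ 2.
  by apply: sumr_ge0 => i _; apply: sumr_ge0 => j _; apply: sqr_ge0.
rewrite H; nra.
Qed.
Section Bil.
Variables (R : realType) (N : nat).
Implicit Types (A B : 'M[R]_N) (u v w : 'rV[R]_N).

Lemma bilE A u v : u *m A *m v^T = (bil A u v)%:M.
Proof. exact: mx11_scalar. Qed.

Lemma bilDl A u v w : bil A (u + v) w = bil A u w + bil A v w.
Proof. by rewrite /bil !mulmxDl mxE. Qed.
Lemma bilDr A u v w : bil A w (u + v) = bil A w u + bil A w v.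
Proof. by rewrite /bil linearD /= mulmxDr mxE. Qed.
Lemma bilZl A a u w : bil A (a *: u) w = a * bil A u w.
Proof. by rewrite /bil -!scalemxAl mxE. Qed.
Lemma bilZr A a u w : bil A w (a *: u) = a * bil A w u.
Proof. by rewrite /bil linearZ /= -scalemxAr mxE. Qed.
Lemma bilNl A u w : bil A (- u) w = - bil A u w.
Proof. by rewrite -scaleN1r bilZl mulN1r. Qed.
Lemma bilNr A u w : bil A w (- u) = - bil A w u.
Proof. by rewrite -scaleN1r bilZr mulN1r. Qed.
Lemma bilBl A u v w : bil A (u - v) w = bil A u w - bil A v w.
Proof. by rewrite bilDl bilNl. Qed.
Lemma bilBr A u v w : bil A w (u - v) = bil A w u - bil A w v.
Proof. by rewrite bilDr bilNr. Qed.
Lemma bil0l A w : bil A 0 w = 0.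
Proof. by rewrite /bil !mul0mx mxE. Qed.
Lemma bil0r A w : bil A w 0 = 0.
Proof. by rewrite /bil trmx0 mulmx0 mxE. Qed.
Lemma bilA0 u w : bil 0 u w = 0.
Proof. by rewrite /bil mulmx0 mul0mx mxE. Qed.
Lemma bilAN A u w : bil (- A) u w = - bil A u w.
Proof. by rewrite /bil mulmxN mulNmx mxE. Qed.

Lemma bil_sym A u v : A^T = A -> bil A u v = bil A v u.
Proof.
move=> hA; rewrite /bil; transitivity ((u *m A *m v^T)^T 0 0); first by rewrite [in RHS]mxE.
by rewrite !trmx_mul trmxK hA mulmxA.
Qed.

Lemma bil_cong (P A : 'M[R]_N) u v :
  bil (P^T *m A *m P) u v = bil A (u *m P^T) (v *m P^T).
Proof. by rewrite /bil trmx_mul trmxK !mulmxA. Qed.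

Lemma bil_delta A i j : bil A (delta_mx 0 i) (delta_mx 0 j) = A i j.
Proof.
by rewrite /bil trmx_delta -rowE -colE !mxE.
Qed.

End Bil.
Section Mink.
Variables (R : realType) (n : nat).
Notation V := ('rV[R]_n.+1).
Notation et := (Defs.eta R n.+1).

Definition sp (x y : V) : R := \sum_(i < n) x 0 (lift ord0 i) * y 0 (lift ord0 i).

Lemma bil_sum (A : 'M[R]_n.+1) u v :
  bil A u v = \sum_j \sum_i u 0 i * A i j * v 0 j.
Proof.
rewrite /bil !mxE; apply: eq_bigr => j _. rewrite !mxE mulr_suml.
by apply: eq_bigr => i _; rewrite ?mxE.
Qed.

Lemma eta_ij (i j : 'I_n.+1) : et i j = (if i == j then (if i == ord0 then 1 else -1) else 0).
Proof. by rewrite /Defs.eta !mxE; case: (i == j); rewrite ?mulr1n ?mulr0n. Qed.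

Lemma bil_eta (x y : V) : bil et x y = x 0 0 * y 0 0 - sp x y.
Proof.
rewrite bil_sum big_ord_recl /sp.
rewrite (bigD1 ord0) //= big1 ?addr0; last first.
  by move=> j hj; rewrite eta_ij (negPf hj) mulr0 mul0r.
rewrite eta_ij eqxx mulr1; congr (_ + _).
rewrite -sumrN; apply: eq_bigr => i _.
rewrite (bigD1 (lift ord0 i)) //= big1 ?addr0; last first.
  by move=> j hj; rewrite eta_ij (negPf hj) mulr0 mul0r.
rewrite eta_ij eqxx /=; ring.
Qed.


Lemma eta_sym : et^T = et.
Proof. by apply/matrixP => i j; rewrite mxE !eta_ij eq_sym; case: eqP => // ->. Qed.

Lemma null0 (w : V) : bil et w w = 0 -> w 0 0 = 0 -> w = 0.
Proof.
rewrite bil_eta => h0 hw0; rewrite hw0 mul0r sub0r in h0.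
have hs : sp w w = 0 by apply/eqP; rewrite -oppr_eq0 h0.
have hz : forall i, w 0 (lift ord0 i) = 0.
  move=> i.
  have hp : forall k : 'I_n, predT k -> 0 <= w 0 (lift ord0 k) * w 0 (lift ord0 k).
    by move=> k _; rewrite -expr2 sqr_ge0.
  have := @psumr_eq0P _ _ predT (fun i => w 0 (lift ord0 i) * w 0 (lift ord0 i)) hp hs i isT.
  by move/eqP; rewrite mulf_eq0 orbb => /eqP.
apply/matrixP => i j; rewrite (ord1 i) mxE; case: (unliftP ord0 j) => [k ->|->] //; by rewrite hz.
Qed.

Lemma null_par (a b : V) : bil et a a = 0 -> bil et b b = 0 -> bil et a b = 0 ->
  a != 0 -> b = (b 0 0 / a 0 0) *: a.
Proof.
move=> haa hbb hab ha.
have ha0 : a 0 0 != 0.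
  by apply: contra ha => /eqP h; apply/eqP; apply: null0.
apply/eqP; rewrite -subr_eq0; apply/eqP; apply: null0.
  rewrite !bilBl !bilBr !bilZl !bilZr (bil_sym b a eta_sym) haa hbb hab; ring.
by rewrite !mxE; field.
Qed.

Definition e (i : 'I_n.+1) : V := delta_mx 0 i.

Lemma quad3 (A : 'M[R]_n.+1) a b c i j k :
  bil A (a *: e i + b *: e j + c *: e k) (a *: e i + b *: e j + c *: e k) =
  a*a*A i i + a*b*A i j + a*c*A i k + b*a*A j i + b*b*A j j + b*c*A j k
  + c*a*A k i + c*b*A k j + c*c*A k k.
Proof. rewrite !bilDl !bilDr !bilZl !bilZr /e !bil_delta; ring. Qed.

Lemma e0_coord a b c j k : j != ord0 -> k != ord0 ->
  (a *: e ord0 + b *: e j + c *: e k) 0 0 = a.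
Proof.
move=> hj hk; rewrite !mxE /=.
have -> : (0 == j) = false by rewrite eq_sym; exact: negPf hj.
have -> : (0 == k) = false by rewrite eq_sym; exact: negPf hk.
rewrite /=; ring.
Qed.

Lemma quad_null (Q : 'M[R]_n.+1) : Q^T = Q ->
  (forall x : V, x != 0 -> bil et x x = 0 -> bil Q x x = 0) -> Q = Q 0 0 *: et.
Proof.
move=> hQ hnull.
have sQ i j : Q j i = Q i j by rewrite -{1}hQ mxE.
have key : forall (a b c : R) (j k : 'I_n.+1), a != 0 -> j != ord0 -> k != ord0 ->
   (c = 0 \/ j != k) -> a^+2 = b^+2 + c^+2 ->
   bil Q (a *: e ord0 + b *: e j + c *: e k) (a *: e ord0 + b *: e j + c *: e k) = 0.
  move=> a b c j k ha hj hk hjk habc; apply: hnull.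
    by apply: contra ha => /eqP h; rewrite -(e0_coord a b c hj hk) h mxE.
  have hj' := hj; have hk' := hk; rewrite eq_sym in hj'; rewrite eq_sym in hk'.
  rewrite quad3 !eta_ij !eqxx (negPf hj) (negPf hk) (negPf hj') (negPf hk').
  case: hjk => [hc|hjk]; first by rewrite hc expr0n addr0 in habc; rewrite hc; nra.
  have hkj := hjk; rewrite eq_sym in hkj.
  rewrite (negPf hjk) (negPf hkj); nra.
have F1 : forall j : 'I_n.+1, j != ord0 -> Q ord0 j = 0 /\ Q j j = - Q ord0 ord0.
  move=> j hj.
  have h1 := key 1 1 0 j j (oner_neq0 _) hj hj (or_introl erefl) ltac:(by rewrite expr0n addr0).
  have h2 := key 1 (-1) 0 j j (oner_neq0 _) hj hj (or_introl erefl) ltac:(by rewrite expr0n addr0 sqrrN).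
  rewrite quad3 (sQ ord0 j) in h1; rewrite quad3 (sQ ord0 j) in h2.
  split; lra.
have F2 : forall j k : 'I_n.+1, j != ord0 -> k != ord0 -> j != k -> Q j k = 0.
  move=> j k hj hk hjk.
  have h := key 5 3 4 j k ltac:(by rewrite pnatr_eq0) hj hk (or_intror hjk) ltac:(rewrite !expr2; lra).
  rewrite quad3 (sQ ord0 j) (sQ ord0 k) (sQ j k) in h.
  have [a1 a2] := F1 j hj; have [b1 b2] := F1 k hk.
  lra.
apply/matrixP => p q; rewrite mxE eta_ij.
case: (unliftP ord0 p) => [p' ->|->]; case: (unliftP ord0 q) => [q' ->|->].
- have hp := neq_lift ord0 p'; have hq := neq_lift ord0 q'.
  rewrite eq_sym in hp; rewrite eq_sym in hq.
  case: eqP => [<-|/eqP hpq].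
    by rewrite (negPf hp) (proj2 (F1 _ hp)) mulrN1.
  by rewrite mulr0 F2.
- have hp := neq_lift ord0 p'; rewrite eq_sym in hp.
  by rewrite (negPf hp) mulr0 sQ (proj1 (F1 _ hp)).
- have hq := neq_lift ord0 q'; rewrite eq_sym in hq.
  by rewrite eq_sym (negPf hq) mulr0 (proj1 (F1 _ hq)).
- by rewrite eqxx mulr1.
Qed.

Lemma sp_ge0 (x : V) : 0 <= sp x x.
Proof. by apply: sumr_ge0 => i _; rewrite -expr2 sqr_ge0. Qed.

Lemma sp_CS (x y : V) : sp x y ^+ 2 <= sp x x * sp y y.
Proof. exact: (CS (fun i => x 0 (lift ord0 i)) (fun i => y 0 (lift ord0 i))). Qed.

Lemma causal0 (a : V) : 0 <= bil et a a -> a != 0 -> a 0 0 != 0.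
Proof.
move=> ha ha0; apply: contra ha0 => /eqP h0; apply/eqP; apply: null0 => //.
move: ha; rewrite bil_eta h0 mul0r sub0r => ha.
have := sp_ge0 a; lra.
Qed.

Lemma causal_sign (a b : V) : 0 <= bil et a a -> 0 <= bil et b b ->
  0 <= bil et a b * (a 0 0 * b 0 0).
Proof.
rewrite !bil_eta => ha hb.
have h1 := sp_CS a b; have h2 := sp_ge0 a; have h3 := sp_ge0 b.
set m := a 0 0 * b 0 0; set s := sp a b.
have hm : s ^+ 2 <= m ^+ 2.
  apply: (le_trans h1); rewrite /m exprMn.
  apply: ler_pM => //; rewrite ?sqr_ge0 //; rewrite expr2; lra.
have : 2 * ((m - s) * m) = (m - s) ^+ 2 + (m ^+ 2 - s ^+ 2) by ring.
have := sqr_ge0 (m - s); rewrite -subr_ge0 in hm; nra.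
Qed.

Lemma time_sign (t a : V) : 0 < bil et t t -> 0 <= bil et a a -> a != 0 ->
  0 < bil et t a * (t 0 0 * a 0 0).
Proof.
move=> ht ha ha0; have a0 := causal0 ha ha0.
move: ht ha; rewrite !bil_eta => ht ha.
have h1 := sp_CS t a; have h2 := sp_ge0 t; have h3 := sp_ge0 a.
have a2 : 0 < a 0 0 ^+ 2 by rewrite lt0r sqrf_eq0 a0 sqr_ge0.
set m := t 0 0 * a 0 0; set s := sp t a.
have hm : s ^+ 2 < m ^+ 2.
  apply: (le_lt_trans h1); rewrite /m exprMn.
  apply: (@le_lt_trans _ _ (sp t t * a 0 0 ^+ 2)).
    by apply: ler_wpM2l => //; rewrite expr2 -subr_ge0.
  by rewrite ltr_pM2r // expr2 -subr_gt0.
have : 2 * ((m - s) * m) = (m - s) ^+ 2 + (m ^+ 2 - s ^+ 2) by ring.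
have := sqr_ge0 (m - s); rewrite -subr_gt0 in hm; nra.
Qed.

Lemma dp_core (t w x : V) : 0 < bil et t t -> bil et w w = 0 -> w != 0 ->
  0 <= bil et x x -> x != 0 -> 0 < bil et t x -> 0 <= bil et w x * bil et t w.
Proof.
move=> ht hw hw0 hx hx0 htx.
have hw' : 0 <= bil et w w by rewrite hw.
have h1 := time_sign ht hx hx0.
have h2 := time_sign ht hw' hw0.
have h3 := causal_sign hw' hx.
have w0 := causal0 hw' hw0.
have r : 0 < t 0 0 * x 0 0 by rewrite -(pmulr_rgt0 _ htx).
have hw2 : 0 < w 0 0 ^+ 2 by rewrite lt0r sqrf_eq0 w0 sqr_ge0.
have hpq : 0 < (t 0 0 * w 0 0) * (w 0 0 * x 0 0).
  have -> : (t 0 0 * w 0 0) * (w 0 0 * x 0 0) = w 0 0 ^+ 2 * (t 0 0 * x 0 0) by ring.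
  exact: mulr_gt0.
have : 0 <= (bil et w x * bil et t w) * ((t 0 0 * w 0 0) * (w 0 0 * x 0 0)).
  have -> : (bil et w x * bil et t w) * ((t 0 0 * w 0 0) * (w 0 0 * x 0 0)) =
    (bil et w x * (w 0 0 * x 0 0)) * (bil et t w * (t 0 0 * w 0 0)) by ring.
  by apply: mulr_ge0 => //; apply: ltW.
by rewrite pmulr_lge0.
Qed.

Lemma eta_sq : et *m et = 1%:M.
Proof.
apply/matrixP => i j; rewrite /Defs.eta mul_diag_mx !mxE.
case: (i == j); rewrite ?mulr1n ?mulr0n ?mulr0 //.
by case: ifP => _; rewrite ?mulr1 // mulrNN mulr1.
Qed.

Lemma eta_unit : et \in unitmx.
Proof. by case: (mulmx1_unit eta_sq). Qed.

End Mink.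

Section Gen.
Variables (R : realType) (n : nat) (g P : 'M[R]_n.+1).
Hypotheses (hgs : g^T = g) (hP : P \in unitmx) (hg : g = P^T *m Defs.eta R n.+1 *m P).
Notation et := (Defs.eta R n.+1).
Notation V := ('rV[R]_n.+1).
Let Pi := invmx P.
Let gi := ginv g.

Lemma g_unit : g \in unitmx.
Proof. by rewrite hg !unitmx_mul unitmx_tr hP eta_unit. Qed.

Lemma gi_sym : gi^T = gi.
Proof. by rewrite /gi /ginv trmx_inv hgs. Qed.

Lemma gi_g : gi *m g = 1%:M.
Proof. exact: (mulVmx g_unit). Qed.
Lemma g_gi : g *m gi = 1%:M.
Proof. exact: (mulmxV g_unit). Qed.

Lemma gi_unit : gi \in unitmx.
Proof. by case: (mulmx1_unit g_gi). Qed.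

Lemma P_Pi : P *m Pi = 1%:M.
Proof. exact: mulmxV. Qed.
Lemma Pi_P : Pi *m P = 1%:M.
Proof. exact: mulVmx. Qed.

Lemma giE : gi = Pi *m et *m Pi^T.
Proof.
have e : g *m (Pi *m et *m Pi^T) = 1%:M.
  rewrite hg -!mulmxA (mulmxA P Pi) P_Pi mul1mx (mulmxA et et) eta_sq mul1mx.
  by rewrite -trmx_mul Pi_P trmx1.
by rewrite -[gi]mulmx1 -e mulmxA gi_g mul1mx.
Qed.

Lemma bil_g u v : bil g u v = bil et (u *m P^T) (v *m P^T).
Proof. by rewrite hg bil_cong. Qed.

Lemma bil_gi k l : bil gi k l = bil et (k *m Pi) (l *m Pi).
Proof. by rewrite giE -[Pi in Pi *m et]trmxK bil_cong trmxK. Qed.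


Lemma det_gi_neq0 : \det gi != 0.
Proof. by have := gi_unit; rewrite unitmxE unitfE. Qed.
Lemma det_g_neq0 : \det g != 0.
Proof. by have := g_unit; rewrite unitmxE unitfE. Qed.

Lemma sing_iff T : singular g T <-> \det T = 0.
Proof.
rewrite /singular /mixed det_mulmx; split; last by move->; rewrite mul0r.
by move/eqP; rewrite mulf_eq0 (negPf det_gi_neq0) orbF => /eqP.
Qed.

Lemma detTTt T : \det (TTt g T) = \det T * \det gi * \det T.
Proof. by rewrite /TTt !det_mulmx det_tr. Qed.
Lemma detTtT T : \det (TtT g T) = \det T * \det gi * \det T.
Proof. by rewrite /TtT !det_mulmx det_tr. Qed.

Lemma TTt_sym T : (TTt g T)^T = TTt g T.
Proof. by rewrite /TTt !trmx_mul trmxK gi_sym mulmxA. Qed.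
Lemma TtT_sym T : (TtT g T)^T = TtT g T.
Proof. by rewrite /TtT !trmx_mul trmxK gi_sym mulmxA. Qed.

Lemma ncp_bil T (k : V) :
  bil g (k *m mixed g T) (k *m mixed g T) = bil (TTt g T) k k.
Proof.
rewrite /bil /mixed /TTt !trmx_mul gi_sym !mulmxA.
by rewrite -(mulmxA _ g gi) g_gi mulmx1.
Qed.

Lemma bi_bil T (k : V) :
  bil gi ((mixed g T *m k^T)^T) ((mixed g T *m k^T)^T) = bil (TtT g T) (k *m gi) (k *m gi).
Proof. by rewrite /bil /mixed /TtT !trmx_mul !trmxK !gi_sym !mulmxA. Qed.

Lemma nullcov_vec (k : V) : null_cov g k -> null_vec g (k *m gi).
Proof.
case=> hk hkk; split.
  apply: contra hk => /eqP h; apply/eqP.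
  by rewrite -[k]mulmx1 -gi_g mulmxA h mul0mx.
by rewrite /bil trmx_mul gi_sym !mulmxA -(mulmxA _ gi g) gi_g mulmx1.
Qed.

Lemma nullvec_cov (v : V) : null_vec g v -> null_cov g (v *m g) /\ (v *m g) *m gi = v.
Proof.
case=> hv hvv; have e : (v *m g) *m gi = v by rewrite -mulmxA g_gi mulmx1.
split=> //; split.
  by apply: contra hv => /eqP h; apply/eqP; rewrite -e h mul0mx.
rewrite /bil trmx_mul hgs !mulmxA -/gi -(mulmxA _ g gi) g_gi mulmx1.
exact: hvv.
Qed.

Lemma zeroQ (M : 'M[R]_n.+1) : M^T = M -> \det M = 0 ->
  (forall v, null_vec g v -> bil M v v = 0) -> M = 0.
Proof.
move=> hM hdet hnull.
set Q := Pi^T *m M *m Pi.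
have eM : P^T *m Q *m P = M.
  by rewrite /Q !mulmxA -trmx_mul Pi_P trmx1 mul1mx -mulmxA Pi_P mulmx1.
have hQ : Q^T = Q by rewrite /Q !trmx_mul trmxK hM mulmxA.
have eQ := quad_null hQ.
have hQ0 : Q = Q 0 0 *: et.
  apply: eQ => x hx hxx.
  set v := x *m Pi^T.
  have ev : v *m P^T = x by rewrite /v -mulmxA -trmx_mul P_Pi trmx1 mulmx1.
  rewrite -ev -bil_cong eM; apply: hnull; split; last by rewrite bil_g ev.
  by apply: contra hx => /eqP h; rewrite -ev h mul0mx.
set l := Q 0 0 in hQ0.
have eMl : M = l *: g by rewrite -eM hQ0 -scalemxAr -scalemxAl hg.
move: hdet; rewrite eMl detZ => /eqP; rewrite mulf_eq0 (negPf det_g_neq0) orbF.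
by rewrite expf_eq0 => /andP [_ /eqP ->]; rewrite scale0r.
Qed.

Lemma bil_row (A B C : 'M[R]_n.+1) i j : bil B (row i A) (row j C) = (A *m B *m C^T) i j.
Proof.
rewrite /bil !mxE; apply: eq_bigr => k _; rewrite !mxE; congr (_ * _).
by apply: eq_bigr => l _; rewrite !mxE.
Qed.

Lemma outer_TTt (s k : V) : TTt g (outer s k) = bil gi k k *: (s^T *m s).
Proof.
rewrite /TTt /outer trmx_mul trmxK.
have -> : s^T *m k *m ginv g *m (k^T *m s) = s^T *m (k *m gi *m k^T) *m s.
  by rewrite !mulmxA.
by rewrite bilE mul_mx_scalar -scalemxAl.
Qed.

Lemma outer_TtT (s k : V) : TtT g (outer s k) = bil gi s s *: (k^T *m k).
Proof.
rewrite /TtT /outer trmx_mul trmxK.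
have -> : k^T *m s *m ginv g *m (s^T *m k) = k^T *m (s *m gi *m s^T) *m k.
  by rewrite !mulmxA.
by rewrite bilE mul_mx_scalar -scalemxAl.
Qed.

Lemma PT_inj (x : V) : x *m P^T = 0 -> x = 0.
Proof.
by move=> h; rewrite -[x]mulmx1 -trmx1 -Pi_P trmx_mul mulmxA h mul0mx.

Qed.

Lemma Pi_inj (x : V) : x *m Pi = 0 -> x = 0.
Proof. by move=> h; rewrite -[x]mulmx1 -Pi_P mulmxA h mul0mx. Qed.

Lemma TTt0_iff T : TTt g T = 0 <-> singular g T /\ null_cone_preserving g T.
Proof.
split.
  move=> h; split.
    apply/sing_iff; move: (detTTt T); rewrite h det0 => /esym/eqP.
    by rewrite !mulf_eq0 (negPf det_gi_neq0) orbF orbb => /eqP.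
  by move=> k _; rewrite ncp_bil h bilA0.
case=> /sing_iff hs hn; apply: zeroQ; first exact: TTt_sym.
  by rewrite detTTt hs !mul0r.
by move=> v hv; rewrite -ncp_bil; apply: hn.
Qed.

Lemma TtT0_iff T : singular g T -> (TtT g T = 0 <->
  forall k, null_cov g k ->
    bil (ginv g) (mixed g T *m k^T)^T (mixed g T *m k^T)^T = 0).
Proof.
move=> /sing_iff hs; split.
  by move=> h k _; rewrite bi_bil h bilA0.
move=> hn; apply: zeroQ; first exact: TtT_sym.
  by rewrite detTtT hs !mul0r.
move=> v hv; have [hk ek] := nullvec_cov hv.
by rewrite -ek -bi_bil; apply: hn.
Qed.

Lemma exists_nullcov : (0 < n)%N -> exists k : V, null_cov g k.
Proof.
move=> hn; set i1 : 'I_n.+1 := Ordinal (hn : (1 < n.+1)%N).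
have hi1 : i1 != ord0 by [].
exists ((1 *: e R ord0 + 1 *: e R i1 + 0 *: e R i1) *m P).
have ek : (1 *: e R ord0 + 1 *: e R i1 + 0 *: e R i1) *m P *m Pi = 1 *: e R ord0 + 1 *: e R i1 + 0 *: e R i1.
  by rewrite -mulmxA P_Pi mulmx1.
split.
  apply/eqP => h; have := @e0_coord R n 1 1 0 i1 i1 hi1 hi1.
  by rewrite -ek h mul0mx mxE => /esym/eqP; rewrite oner_eq0.
rewrite -/gi bil_gi ek quad3 !eta_ij !eqxx.
have hi1' : (ord0 == i1) = false by [].
rewrite hi1' /=; ring.
Qed.

Lemma TTt0_outer T : (0 < n)%N ->
  (TTt g T = 0 <-> exists s k : V, null_cov g k /\ T = outer s k).
Proof.
move=> hn; split; last first.
  by case=> s [k [[_ hk] ->]]; rewrite outer_TTt /gi hk scale0r.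
move=> h.
have hrow : forall i j, bil et (row i T *m Pi) (row j T *m Pi) = 0.
  by move=> i j; rewrite -bil_gi bil_row; move: h; rewrite /TTt -/gi => ->; rewrite mxE.
case: (pickP (fun j => row j T != 0)) => [j hj | hall]; last first.
  have [k hk] := exists_nullcov hn.
  exists 0, k; split=> //.
  apply/matrixP => a b; rewrite /outer trmx0 mul0mx mxE.
  have := hall a; move/negbFE/eqP/matrixP/(_ 0 b).
  by rewrite !mxE.
have hyj : row j T *m Pi != 0.
  by apply: contra hj => /eqP /Pi_inj ->.
set c := fun i => (row i T *m Pi) 0 0 / (row j T *m Pi) 0 0.
have hc : forall i, row i T = c i *: row j T.
  move=> i; have := null_par (hrow j j) (hrow i i) (hrow j i) hyj.
  move=> /(congr1 (fun x => x *m P)).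
  by rewrite -scalemxAl -!mulmxA Pi_P !mulmx1.
exists (\row_i c i), (row j T); split.
  split=> //; rewrite -/gi bil_row; move: h; rewrite /TTt -/gi => ->; by rewrite mxE.
apply/matrixP => a b; rewrite /outer !mxE big_ord1 !mxE.
by move: (hc a) => /matrixP /(_ 0 b); rewrite !mxE.
Qed.

Lemma nz_entry (k : V) : k != 0 -> exists b, k 0 b != 0.
Proof.
move=> hk; case: (pickP (fun b => k 0 b != 0)) => [b hb | hall]; first by exists b.
case/eqP: hk; apply/matrixP => a b; rewrite (ord1 a) mxE.
by have := hall b; move/negbFE/eqP.
Qed.

Lemma both0_outer T : (0 < n)%N ->
  (TTt g T = 0 /\ TtT g T = 0 <->
   (exists m k : V, null_cov g m /\ null_cov g k /\ T = outer m k) \/ T = 0).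
Proof.
move=> hn; split.
  case=> h1 h2; have [s [k [[hk0 hk] eT]]] := (TTt0_outer T hn).1 h1.
  case: (eqVneq s 0) => [s0|s0].
    right; rewrite eT s0 /outer; apply/matrixP => i j.
    by rewrite !mxE big1 // => l _; rewrite !mxE mul0r.
  left; exists s, k; do !split=> //.
  move: h2; rewrite eT outer_TtT => /matrixP.
  have [b hb] := nz_entry hk0.
  move=> /(_ b b); rewrite !mxE big_ord1 !mxE => /eqP.
  by rewrite !mulf_eq0 (negPf hb) /= orbF => /eqP.
case=> [[m [k [[_ hm] [[_ hk] ->]]]]|->].
  by rewrite outer_TTt outer_TtT /gi hm hk !scale0r.
by split; rewrite /TTt /TtT ?trmx0 ?mulmx0 ?mul0mx.
Qed.

Lemma outer_bil (m k u v : V) :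
  bil (outer m k) u v = bil g (m *m gi) u * bil g (k *m gi) v.
Proof.
have E : forall w x : V, bil g (w *m gi) x = (x *m w^T) 0 0.
  move=> w x; rewrite /bil -(mulmxA w gi g) gi_g mulmx1.
  by rewrite -[in RHS](trmxK (x *m w^T)) [in RHS]mxE trmx_mul trmxK.
rewrite !E /bil /outer !mulmxA -(mulmxA (u *m m^T)) [in LHS]mxE big_ord1.
congr (_ * _); rewrite -[in RHS](trmxK (v *m k^T)) [in RHS]mxE trmx_mul trmxK //.
Qed.

Lemma DP_part T tau : (0 < n)%N -> timelike g tau ->
  TTt g T = 0 /\ TtT g T = 0 -> DP g tau T \/ DP g tau (- T).
Proof.
move=> hn ht hb; case: ((both0_outer T hn).1 hb) => [[m [k [hm [hk ->]]]]|->]; last first.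
  by left=> u v _ _; rewrite bilA0.
have [hm0 hmm] := nullcov_vec hm; have [hk0 hkk] := nullcov_vec hk.
set W1 := m *m gi *m P^T; set W2 := k *m gi *m P^T; set t := tau *m P^T.
have ht' : 0 < bil et t t by rewrite -bil_g.
have hW1 : bil et W1 W1 = 0 by rewrite -bil_g.
have hW2 : bil et W2 W2 = 0 by rewrite -bil_g.
have hW10 : W1 != 0 by apply: contra hm0 => /eqP /PT_inj ->.
have hW20 : W2 != 0 by apply: contra hk0 => /eqP /PT_inj ->.
have core : forall (W : V) u, bil et W W = 0 -> W != 0 -> future_causal g tau u ->
    0 <= bil et W (u *m P^T) * bil et t W.
  move=> W u hW hW0 [hu0 [huu htu]]; apply: dp_core => //.
  - by rewrite -bil_g.
  - by apply: contra hu0 => /eqP /PT_inj ->.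
  - by rewrite -bil_g.
have s1 : bil et t W1 != 0.
  have hW1' : 0 <= bil et W1 W1 by rewrite hW1.
  have := time_sign ht' hW1' hW10.
  by apply: contraTneq => ->; rewrite mul0r ltxx.
have s2 : bil et t W2 != 0.
  have hW2' : 0 <= bil et W2 W2 by rewrite hW2.
  have := time_sign ht' hW2' hW20.
  by apply: contraTneq => ->; rewrite mul0r ltxx.
have EB : forall u v, bil (outer m k) u v = bil et W1 (u *m P^T) * bil et W2 (v *m P^T).
  by move=> u v; rewrite outer_bil !bil_g.
have [pos|neg] := ltrP 0 (bil et t W1 * bil et t W2).
  left=> u v hu hv; rewrite EB.
  have h1 := core W1 u hW1 hW10 hu; have h2 := core W2 v hW2 hW20 hv.
  have : 0 <= (bil et W1 (u *m P^T) * bil et W2 (v *m P^T)) * (bil et t W1 * bil et t W2).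
    rewrite (_ : _ * _ = (bil et W1 (u *m P^T) * bil et t W1) * (bil et W2 (v *m P^T) * bil et t W2)); last by ring.
    exact: mulr_ge0.
  by rewrite pmulr_lge0.
have neg' : bil et t W1 * bil et t W2 < 0.
  by rewrite lt_neqAle neg andbT mulf_neq0.
right=> u v hu hv; rewrite bilAN EB.
have h1 := core W1 u hW1 hW10 hu; have h2 := core W2 v hW2 hW20 hv.
have : 0 <= (bil et W1 (u *m P^T) * bil et W2 (v *m P^T)) * (bil et t W1 * bil et t W2).
  rewrite (_ : _ * _ = (bil et W1 (u *m P^T) * bil et t W1) * (bil et W2 (v *m P^T) * bil et t W2)); last by ring.
  exact: mulr_ge0.
by rewrite nmulr_lge0 // oppr_ge0.
Qed.

End Gen.

Theorem mainTheorem11 (R : realType) (N : nat) (g : 'M[R]_N)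
    (tau : 'rV[R]_N) (T : 'M[R]_N) :
  (3 <= N)%N -> lorentzian g -> timelike g tau ->
  (* (a) *)
  ((TTt g T = 0 <-> singular g T /\ null_cone_preserving g T) /\
   (singular g T /\ null_cone_preserving g T <->
      exists s k : 'rV[R]_N, null_cov g k /\ T = outer s k)) /\
  (* (b) *)
  ((TTt g T = 0 /\ TtT g T = 0 <->
      singular g T /\ null_cone_bi_preserving g T) /\
   (singular g T /\ null_cone_bi_preserving g T <->
      (exists n k : 'rV[R]_N, null_cov g n /\ null_cov g k /\ T = outer n k)
      \/ T = 0)) /\
  (* in case (b), T in DP u -DP *)
  (TTt g T = 0 /\ TtT g T = 0 -> DP g tau T \/ DP g tau (- T)).
Proof.
case: N g tau T => [//|n] g tau T hN [hgs [P [hP hg]]] ht.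
have hn : (0 < n)%N by case: n hN {g tau T hgs P hP hg ht}.
have A1 := TTt0_iff hgs hP hg T.
have A2 := TTt0_outer hP hg T hn.
have B1 : TTt g T = 0 /\ TtT g T = 0 <-> singular g T /\ null_cone_bi_preserving g T.
  split.
    case=> h1 h2; have [hs hncp] := A1.1 h1.
    by split=> //; split=> //; apply: (TtT0_iff hgs hP hg hs).1.
  case=> hs [hncp hbi]; split; first by apply: A1.2.
  exact: (TtT0_iff hgs hP hg hs).2.
have B2 := both0_outer hP hg T hn.
split; [split|split; [split|]].
- exact: A1.
- by split=> h; [apply: A2.1; apply: A1.2 | apply: A1.1; apply: A2.2].
- exact: B1.
- by split=> h; [apply: B2.1; apply: B1.2 | apply: B1.1; apply: B2.2].
- exact: DP_part hgs hP hg T tau hn ht.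
Qed.
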